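(* Let $\mathcal{O}:\mathcal{P}\to\mathcal{P}$ be a lowering operator and let $\{f_n\}_{n\ge0}$ be a sequence of polynomials in $\mathcal{P}$ such that $\rho_n f_n=\mathcal{O}(f_{n+1})$ for all $n\ge0$, with $\rho_n\in\mathbb{C}\setminus\{0\}$. Then either $f_n=0$ for all $n\ge0$, or there is $n_0\ge0$ such that $f_{n_0}\neq0$, $f_i=0$ for $0\le i\le n_0-1$ (if $n_0\ge1$), and $\deg(f_{n+1})=\deg(f_n)+1$ for all $n\ge n_0$.
   Context: $\mathcal{P}$ denotes the complex vector space of polynomials in one variable $x$ with complex coefficients. A lowering operator is a linear map $\mathcal{O}:\mathcal{P}\to\mathcal{P}$ such that $\mathcal{O}(1)=0$ and $\deg(\mathcal{O}(x^n))=n-1$ for all $n\ge 1$. *)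

(* Defs.v *)
From HB Require Import structures.
From mathcomp Require Import all_boot all_order all_algebra.
From mathcomp Require Import reals.
From mathcomp Require Export complex.
Set Implicit Arguments. Unset Strict Implicit. Unset Printing Implicit Defensive.
Import Order.TTheory GRing.Theory Num.Theory.
Local Open Scope ring_scope.

(* A lowering operator: a linear map on polynomials with O(1) = 0 and
   deg O(x^n) = n - 1 for n >= 1 (i.e. O(x^n) is nonzero of size n). *)
Definition lowering_operator (R : realType)
  (O : {linear {poly R[i]} -> {poly R[i]}}) : Prop :=
  O 1 = 0 /\ forall n : nat, (1 <= n)%N -> size (O 'X^n) = n.

(* Main.v *)
Require Import Defs.
From HB Require Import structures.
From mathcomp Require Import all_boot all_order all_algebra.
From mathcomp Require Import reals complex.
From mathcomp Require Import zify.
From Stdlib Require Import Classical.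
Import GRing.Theory Num.Theory.
Local Open Scope ring_scope.

Lemma sizeO (R : realType) (O : {linear {poly R[i]} -> {poly R[i]}}) :
  lowering_operator O -> forall p, size (O p) = (size p).-1.
Proof.
case=> O1 OX p.
move: {2}(size p) (leqnn (size p)) => m; elim: m p => [|m IH] p hp.
  by move: hp; rewrite leqn0 size_poly_eq0 => /eqP ->; rewrite linear0 size_poly0.
case: (ltnP (size p) m.+1) => hs; first by apply: IH.
have {hp} hsz : size p = m.+1 by apply/eqP; rewrite eqn_leq hp hs.
set c := lead_coef p.
have c0 : c != 0 by rewrite lead_coef_eq0 -size_poly_eq0 hsz.
set q := p - c *: 'X^m.
have hq : (size q <= m)%N.
  apply/leq_sizeP => j hj; rewrite /q coefB coefZ coefXn.
  move: hj; rewrite leq_eqVlt => /orP [/eqP <-|hmj].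
    by rewrite eqxx mulr1 /c lead_coefE hsz subrr.
  rewrite (gtn_eqF hmj) mulr0 subr0.
  by apply/(leq_sizeP _ _ (leqnn (size p))); rewrite hsz.
have pe : p = q + c *: 'X^m by rewrite /q subrK.
rewrite pe linearD linearZ /= -pe hsz /=.
have IHq := IH q hq.
destruct m as [|m].
  by rewrite expr0 O1 scaler0 addr0 IHq; move: hq; rewrite leqn0 => /eqP ->.
rewrite addrC size_polyDl size_scale ?OX //.
rewrite IHq; move: hq; case: (size q) => //= k; lia.
Qed.

Theorem proposition1 (R : realType)
  (O : {linear {poly R[i]} -> {poly R[i]}}) (f : nat -> {poly R[i]})
  (rho : nat -> R[i]) :
  lowering_operator O ->
  (forall n, rho n != 0) ->
  (forall n, rho n *: f n = O (f n.+1)) ->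
  (forall n, f n = 0) \/
  (exists n0 : nat,
     f n0 != 0 /\ (forall i, (i < n0)%N -> f i = 0) /\
     (forall n, (n0 <= n)%N -> (size (f n.+1)).-1 = ((size (f n)).-1).+1)).
Proof.
move=> hO hr hf.
have hs : forall n, size (f n) = (size (f n.+1)).-1.
  by move=> n; rewrite -(size_scale (f n) (hr n)) hf sizeO.
have nz : forall n, f n != 0 -> f n.+1 != 0.
  move=> n; apply: contra => /eqP e.
  by rewrite -size_poly_eq0 hs e size_poly0.
have [ex|nex] := classic (exists n, f n != 0).
- right; case: (ex_minnP ex) => n0 h0 hmin; exists n0; split => //; split.
    by move=> i hi; apply/eqP; apply: contraTT hi => /hmin; rewrite -leqNgt.
  move=> n hn.
  have fn : f n != 0.
    elim: n hn => [|n IH]; first by rewrite leqn0 => /eqP <-.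
    rewrite leq_eqVlt => /orP [/eqP <- //|]; rewrite ltnS => /IH; exact: nz.
  have : (0 < size (f n))%N by rewrite size_poly_gt0.
  rewrite (hs n); case: (size (f n.+1)) => //= k; lia.
- left => n; apply/eqP; case: (boolP (f n == 0)) => // h; by exfalso; apply: nex; exists n.
Qed.
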